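(* Consider the following algorithm. (1) Let $S_L$ be the welfare $W$ of the allocation obtained by ranking ads by the scores $b_i q_i$. (2) Let $S_H = \sum_{j=1}^s n_j b_{(j)} q_{(j)}$ for that same allocation. (3) Compute the allocations obtained by ranking ads by the scores $b_i q_i - \lambda q_i S$ for $S=S_L$ and for $S=S_H$. (4) If these two allocations coincide, output it. (5) Otherwise let $\hat S = \frac12(S_L+S_H)$ and compute the allocation obtained by ranking by scores $b_i q_i - \lambda q_i \hat S$. (6) Let $\phi(\hat S) = \sum_{j=1}^s n_j (b_{(j)} q_{(j)} - \lambda q_{(j)} \hat S)$ for this allocation; if $\phi(\hat S) < \hat S$ set $S_H=\hat S$, otherwise set $S_L=\hat S$. (7) Repeat steps (3)–(6) until the allocations in step (4) coincide, and output the resulting allocation. Then the allocation output by this algorithm is an efficiency-maximizing allocation, i.e., it maximizes $W$ over all allocations.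
   Context: There are $s$ positions with quality scores $n_1 \ge \dots \ge n_s \ge 0$ and a set of advertisers, advertiser $i$ having quality score $q_i \ge 0$ and bid $b_i$. An allocation places distinct advertisers in positions $1,\dots,s$; write $q_{(j)}, b_{(j)}$ for the quality and bid of the ad in position $j$. Fix $\lambda>0$. The (expected social) welfare of an allocation is $W = \frac{\sum_{j=1}^s n_j b_{(j)} q_{(j)}}{1+\lambda\sum_{j=1}^s n_j q_{(j)}}$ (this corresponds to predicted click-through rates $p_j = \nu n_j q_{(j)}/(1+\lambda\sum_\ell n_\ell q_{(\ell)})$ with $\nu=1$). ''Ranking ads by scores $x_i$'' means sorting the advertisers in decreasing order of $x_i$ and placing the $j$-th in position $j$ for $j=1,\dots,s$. *)

(* Defs.v *)
From HB Require Import structures.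
From mathcomp Require Import all_boot all_order all_algebra.
Set Implicit Arguments. Unset Strict Implicit. Unset Printing Implicit Defensive.
Import Order.TTheory GRing.Theory Num.Theory.
Local Open Scope ring_scope.

(* Positions are 'I_s; advertisers form a finite type I; an allocation is an
   injective map a : 'I_s -> I (a j = the advertiser in position j). *)
Section Auction.
Variables (R : realFieldType) (I : finType) (s : nat).
Variables (n : 'I_s -> R) (q b : I -> R) (lam : R).

Definition is_alloc (a : {ffun 'I_s -> I}) : Prop := injective a.

(* "a is the allocation obtained by ranking ads by the scores x": a is the
   list of the first s advertisers of some decreasing sort of all advertisers
   (ties broken arbitrarily). *)
Definition ranked_by (x : I -> R) (a : {ffun 'I_s -> I}) : Prop :=
  [/\ injective a,
      (forall j k : 'I_s, (j <= k)%N -> x (a k) <= x (a j)) &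
      (forall i, i \notin codom a -> forall j : 'I_s, x i <= x (a j))].

Definition Nsum (a : {ffun 'I_s -> I}) : R :=
  \sum_(j < s) n j * b (a j) * q (a j).
Definition Dsum (a : {ffun 'I_s -> I}) : R :=
  \sum_(j < s) n j * q (a j).
Definition welfare (a : {ffun 'I_s -> I}) : R := Nsum a / (1 + lam * Dsum a).

Definition score (S : R) (i : I) : R := b i * q i - lam * q i * S.

Definition phi (S : R) (a : {ffun 'I_s -> I}) : R :=
  \sum_(j < s) n j * (b (a j) * q (a j) - lam * q (a j) * S).

(* A terminating run of the algorithm outputs A, after k executions of
   steps (3)-(6) in which the allocations of step (4) differ, and in the
   (k+1)-th execution of step (3) they coincide.  SL t, SH t are the values
   of S_L, S_H at the start of iteration t; AL t, AH t are the allocations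
   computed in step (3) of iteration t; AM t the one computed in step (5).
   Every ranking may break ties arbitrarily. *)
Definition alg_output (A : {ffun 'I_s -> I}) : Prop :=
  exists (k : nat) (A0 : {ffun 'I_s -> I}) (SL SH : nat -> R)
         (AL AH AM : nat -> {ffun 'I_s -> I}),
    [/\ ranked_by (fun i => b i * q i) A0,
        SL 0%N = welfare A0 & SH 0%N = Nsum A0] /\
    (forall t, (t <= k)%N ->
        ranked_by (score (SL t)) (AL t) /\ ranked_by (score (SH t)) (AH t)) /\
    (forall t, (t < k)%N ->
        let Sh := (SL t + SH t) / 2 in
        [/\ AL t <> AH t, ranked_by (score Sh) (AM t) &
            (if phi Sh (AM t) < Sh
             then SL t.+1 = SL t /\ SH t.+1 = Sh
             else SL t.+1 = Sh /\ SH t.+1 = SH t)]) /\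
    AL k = AH k /\ A = AL k.

End Auction.

(* Main.v *)
Require Import Defs.
From HB Require Import structures.
From mathcomp Require Import all_boot all_order all_algebra.
From mathcomp Require Import ring lra zify.
Import Order.TTheory GRing.Theory Num.Theory.
Local Open Scope ring_scope.
Lemma sum_codom (R : realFieldType) (I : finType) (S : nat) (a : 'I_S -> I) (g : I -> R) :
  injective a ->
  \sum_i g i = \sum_j g (a j) + \sum_(i | i \notin codom a) g i.
Proof.
move=> ia.
rewrite (bigID (mem (codom a))) /=.
congr (_ + _).
rewrite -big_uniq /=; last by apply/injectiveP.
by rewrite /codom big_image.
Qed.

Lemma prefix_le (R : realFieldType) (I : finType) (S : nat) (x : I -> R)
  (a a' : {ffun 'I_S -> I}) (k : nat) :
  ranked_by x a -> injective a' ->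
  \sum_(j : 'I_S | (j < k)%N) x (a' j) <= \sum_(j : 'I_S | (j < k)%N) x (a j).
Proof.
case=> ia hmono hout ia'.
have [j0 hj0|none] := pickP (fun j : 'I_S => (j < k)%N); last first.
  by rewrite !big_pred0 // => j; rewrite none.
have m0lt : ((minn k S).-1 < S)%N.
  have := ltn_ord j0; move: hj0; rewrite /minn; case: ifP; lia.
pose m0 := Ordinal m0lt.
pose c := x (a m0).
have hjk : forall j : 'I_S, (j < k)%N = (j <= m0)%N.
  move=> j; have := ltn_ord j; move: hj0 (ltn_ord j0); rewrite /m0 /= /minn.
  case: ifP => ? ? ? ?; apply/idP/idP; lia.
pose y i := if [exists j : 'I_S, (j < k)%N && (a j == i)] then x i - c else 0.
have y0 : forall i, 0 <= y i.
  move=> i; rewrite /y; case: existsP => [[j /andP [hj /eqP <-]]|_]//.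
  rewrite subr_ge0 /c; apply: hmono; by rewrite -hjk.
have y1 : forall i, x i - c <= y i.
  move=> i; rewrite /y; case: existsP => [_|hn]//.
  rewrite subr_le0 /c.
  case: (boolP (i \in codom a)) => hi; last exact: hout.
  move/codomP: hi => [j ei]; rewrite ei; apply: hmono.
  have: ~~ (j < k)%N by apply/negP => hj; apply: hn; exists j; rewrite hj ei eqxx.
  by rewrite hjk -ltnNge; apply: ltnW.
have ya : forall j : 'I_S, y (a j) = if (j < k)%N then x (a j) - c else 0.
  move=> j; rewrite /y; case: existsP => [[j' /andP [hj' /eqP e]]|hn].
    by move: (ia _ _ e) => <-; rewrite hj'.
  by case: ifP => // hj; exfalso; apply: hn; exists j; rewrite hj eqxx.
have yout : forall i, i \notin codom a -> y i = 0.
  move=> i hi; rewrite /y; case: existsP => [[j /andP [_ /eqP e]]|]//.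
  by move: hi; rewrite -e codom_f.
suff : \sum_(j : 'I_S | (j < k)%N) (x (a' j) - c) <= \sum_(j : 'I_S | (j < k)%N) (x (a j) - c).
  by rewrite !sumrB lerD2r.
apply: (le_trans (y := \sum_(j : 'I_S | (j < k)%N) y (a' j))).
  by apply: ler_sum => j _; apply: y1.
apply: (le_trans (y := \sum_j y (a' j))).
  rewrite [X in _ <= X](bigID (fun j : 'I_S => (j < k)%N)) /= lerDl.
  by apply: sumr_ge0 => j _.
apply: (le_trans (y := \sum_i y i)).
  rewrite (@sum_codom _ _ _ _ y ia') lerDl; by apply: sumr_ge0 => j _.
rewrite (@sum_codom _ _ _ _ y ia) [X in _ + X]big1 ?addr0; last by move=> i; apply: yout.
rewrite [X in X <= _](bigID (fun j : 'I_S => (j < k)%N)) /= [X in _ + X]big1 ?addr0.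
  by rewrite (eq_bigr (fun j => x (a j) - c)) // => j /= hj; rewrite ya hj.
by move=> j /= hj; rewrite ya (negbTE hj).
Qed.

Lemma abel (R : realFieldType) (N X : nat -> R) s :
  \sum_(j < s) N j * X j =
  \sum_(m < s) (N m - N m.+1) * (\sum_(j < m.+1) X j) + N s * \sum_(j < s) X j.
Proof.
elim: s => [|s IH]; first by rewrite !big_ord0 mulr0 addr0.
rewrite big_ord_recr /= IH big_ord_recr /= [in RHS]big_ord_recr /=.
ring.
Qed.

Lemma rearr (R : realFieldType) (I : finType) (S : nat) (n : 'I_S -> R) (x : I -> R)
  (a a' : {ffun 'I_S -> I}) :
  (forall j k : 'I_S, (j <= k)%N -> n k <= n j) -> (forall j, 0 <= n j) ->
  ranked_by x a -> injective a' ->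
  \sum_j n j * x (a' j) <= \sum_j n j * x (a j).
Proof.
case: S n a a' => [|S] n a a' hm h0 ra ia'; first by rewrite !big_ord0.
pose N k := if (k < S.+1)%N then n (inord k) else 0.
pose F (f : {ffun 'I_S.+1 -> I}) k := x (f (inord k)).
have E : forall f : {ffun 'I_S.+1 -> I}, \sum_j n j * x (f j) = \sum_(j < S.+1) N j * F f j.
  by move=> f; apply: eq_bigr => j _; rewrite /N /F ltn_ord inord_val.
rewrite !E !abel /N ltnn !mul0r !addr0 -/N.
apply: ler_sum => m _; apply: ler_wpM2l.
  rewrite subr_ge0 /N ltn_ord; case: ifP => hm1; last exact: h0.
  apply: hm; rewrite !inordK //; exact: ltn_ord.
have E2 : forall f : {ffun 'I_S.+1 -> I}, \sum_(j < m.+1) F f j =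
   \sum_(j : 'I_S.+1 | (j < m.+1)%N) x (f j).
  move=> f; rewrite (big_ord_widen _ _ (ltn_ord m)).
  by apply: eq_bigr => j _; rewrite /F inord_val.
rewrite !E2; exact: prefix_le.
Qed.

Theorem theorem3 (R : realFieldType) (I : finType) (s : nat)
    (n : 'I_s -> R) (q b : I -> R) (lam : R)
    (hlam : 0 < lam)
    (hn_mono : forall j k : 'I_s, (j <= k)%N -> n k <= n j)
    (hn_ge0 : forall j : 'I_s, 0 <= n j)
    (hq : forall i, 0 <= q i)
    (hb : forall i, 0 <= b i)
    (A : {ffun 'I_s -> I}) :
  alg_output n q b lam A ->
  is_alloc A /\
  (forall A' : {ffun 'I_s -> I}, is_alloc A' ->
     welfare n q b lam A' <= welfare n q b lam A).
Proof.
case=> k [A0 [SL [SH [AL [AH [AM [[rA0 eL eH] [hR [hS [eqk hA]]]]]]]]]].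
have Nge0 : forall a, 0 <= Nsum n q b a.
  move=> a; apply: sumr_ge0 => j _; apply: mulr_ge0; [apply: mulr_ge0|]; by [].
have Dge0 : forall a, 0 <= Dsum n q a.
  move=> a; apply: sumr_ge0 => j _; apply: mulr_ge0; by [].
have phiE : forall S a, phi n q b lam S a = Nsum n q b a - lam * S * Dsum n q a.
  move=> S a; rewrite /phi /Nsum /Dsum mulr_sumr -sumrB; apply: eq_bigr => j _; ring.
have Dpos : forall a, 0 < 1 + lam * Dsum n q a.
  move=> a; have := Dge0 a; nra.
have Wge : forall S a, (S <= welfare n q b lam a) = (S <= phi n q b lam S a).
  move=> S a; rewrite /welfare ler_pdivlMr // phiE.
  apply/idP/idP; lra.
have Wle : forall S a, (welfare n q b lam a <= S) = (phi n q b lam S a <= S).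
  move=> S a; rewrite /welfare ler_pdivrMr // phiE.
  apply/idP/idP; lra.
have prank : forall S (a a' : {ffun 'I_s -> I}), ranked_by (score q b lam S) a -> injective a' ->
    phi n q b lam S a' <= phi n q b lam S a.
  by move=> S a a' ra ia'; exact: (@rearr _ _ _ n (score q b lam S) a a' hn_mono hn_ge0 ra ia').
have inv : forall t, (t <= k)%N ->
   (exists a : {ffun 'I_s -> I}, injective a /\ SL t <= welfare n q b lam a) /\
   (forall a : {ffun 'I_s -> I}, injective a -> welfare n q b lam a <= SH t).
  elim=> [_|t IH ht].
    split; first by exists A0; case: rA0 => ia _ _; rewrite eL.
    move=> a ia; rewrite eH.
    apply: (le_trans (y := Nsum n q b a)).
      rewrite /welfare ler_pdivrMr //; have := mulr_ge0 (Nge0 a) (mulr_ge0 (ltW hlam) (Dge0 a)); lra.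
    have E : forall f : {ffun 'I_s -> I}, Nsum n q b f = \sum_j n j * (b (f j) * q (f j)).
      by move=> f; apply: eq_bigr => j _; rewrite mulrA.
    rewrite !E; exact: (@rearr _ _ _ n (fun i => b i * q i) A0 a hn_mono hn_ge0 rA0 ia).
  have [[a0 [ia0 ha0]] hH] := IH (ltnW ht).
  have := hS t ht; rewrite /=; case=> _ rM.
  have iM : injective (AM t) by case: rM.
  case: ifP => hlt [-> ->].
    split; first by exists a0.
    move=> a ia; rewrite Wle; apply: ltW; apply: le_lt_trans hlt; exact: prank.
  split; last by [].
  exists (AM t); split => //; rewrite Wge; rewrite leNgt hlt //.
have [[a0 [ia0 ha0]] hH] := inv k (leqnn k).
have [rL rH] := hR k (leqnn k).
have iA : injective A by rewrite hA; case: rL.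
split => // A' iA'.
rewrite hA.
have pL : SL k <= phi n q b lam (SL k) (AL k).
  apply: (le_trans (y := phi n q b lam (SL k) a0)); first by rewrite -Wge.
  exact: prank.
set S' := welfare n q b lam A'.
have hS'H : S' <= SH k by apply: hH.
have [hlt|hge] := ltP S' (SL k).
  by apply: ltW; apply: lt_le_trans hlt _; rewrite Wge.
have e1 : phi n q b lam S' A' = S'.
  apply/eqP; rewrite eq_le -Wle -Wge lexx //.
rewrite Wge -{1}e1.
have gL := prank (SL k) (AL k) A' rL iA'.
have gH := prank (SH k) (AL k) A' ltac:(by rewrite eqk) iA'.
move: gL gH; rewrite !phiE.
set NA := Nsum n q b (AL k); set NB := Nsum n q b A'.
set DA := Dsum n q (AL k); set DB := Dsum n q A'.
move=> gL gH.
have [hD|hD] := leP DB DA.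
  have : lam * (SH k - S') * (DA - DB) >= 0.
    apply: mulr_ge0; [apply: mulr_ge0|]; lra.
  nra.
have : lam * (S' - SL k) * (DB - DA) >= 0.
  apply: mulr_ge0; [apply: mulr_ge0|]; lra.
nra.
Qed.
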